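(* For any fuzzifying topological space $(X,\tau)$ and $A\subseteq X$, $$\max\big(0,\ L_PC(X,\tau)+F_P(A)-1\big)\le L_PC(A,\tau/A),$$ i.e. $\vDash (X,\tau)\in L_PC\otimes A\in F_P\to(A,\tau/A)\in L_PC$.
   Context: Łukasiewicz semantics: $[\varphi\otimes\psi]=\max(0,[\varphi]+[\psi]-1)$, $[\varphi\to\psi]=\min(1,1-[\varphi]+[\psi])$, $[\forall]=\inf$, $[\exists]=\sup$, $\vDash$ means value $1$. A fuzzifying topology on $X$ is $\tau:P(X)\to[0,1]$ with $\tau(X)=1$, $\tau(A\cap B)\ge\min(\tau(A),\tau(B))$, $\tau(\bigcup A_\lambda)\ge\inf\tau(A_\lambda)$. $N_x(A)=\sup_{x\in B\subseteq A}\tau(B)$; $Cl(A)(x)=1-N_x(X\setminus A)$; for $\mu:X\to[0,1]$, $Int(\mu)(x)=\sup_{x\in B}\min(\tau(B),\inf_{y\in B}\mu(y))$. Pre-open degrees $\tau_P(A)=\inf_{x\in A}Int(Cl(A))(x)$; $F_P(A)=\tau_P(X\setminus A)$; $N^P_x(A)=\sup_{x\in B\subseteq A}\tau_P(B)$. For $G\subseteq X$: $(\tau_P/G)(B)=\sup\{\tau_P(V):V\cap G=B\}$, $B\subseteq G$. Compactness degree of a set $G$ w.r.t. $\rho:P(G)\to[0,1]$: with $K(\Re,G)=\inf_{x\in G}\sup_{B\ni x}\Re(B)$, $[\Re\subseteq\rho]=\inf_B\min(1,1-\Re(B)+\rho(B))$, $\wp\le\Re$ pointwise, $FF(\wp)=1-\inf\{\delta\in[0,1]:\{B:\wp(B)>\delta\}\text{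 finite}\}$, $\Gamma(G,\rho)=\inf_{\Re}\min\big(1,1-\max(0,K(\Re,G)+[\Re\subseteq\rho]-1)+\sup_{\wp\le\Re}\max(0,K(\wp,G)+FF(\wp)-1)\big)$. $\Gamma_P(G)=\Gamma(G,\tau_P/G)$. Locally strong compactness: $L_PC(X,\tau)=\inf_{x\in X}\sup_{B\subseteq X}\max(0,N^P_x(B)+\Gamma_P(B)-1)$; for the subspace, with $N^{P^A}_x(G)=\sup_{x\in C\subseteq G}(\tau_P/A)(C)$, $L_PC(A,\tau/A)=\inf_{x\in A}\sup_{G\subseteq A}\max(0,N^{P^A}_x(G)+\Gamma(G,\tau_P/G)-1)$. *)

(* Defs.v *)
From HB Require Import structures.
From mathcomp Require Import all_boot all_order all_algebra.
From mathcomp Require Import boolp classical_sets cardinality reals.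
Set Implicit Arguments. Unset Strict Implicit. Unset Printing Implicit Defensive.
Import Order.TTheory GRing.Theory Num.Theory.
Local Open Scope classical_set_scope.
Local Open Scope ring_scope.

Section FuzzyDefs.
Variables (R : realType) (X : Type).

(* Sup / inf in the complete lattice [0,1]: sup of empty = 0, inf of empty = 1. *)
Definition sup01 (S : set R) : R := sup (S `|` [set 0]).
Definition inf01 (S : set R) : R := inf (S `|` [set 1]).

Definition luk_and (a b : R) : R := Num.max 0 (a + b - 1).
Definition luk_imp (a b : R) : R := Num.min 1 (1 - a + b).

Definition is_fuzzifying_topology (tau : set X -> R) : Prop :=
  (forall A, 0 <= tau A <= 1) /\
  tau setT = 1 /\
  (forall A B, Num.min (tau A) (tau B) <= tau (A `&` B)) /\
  (forall F : set (set X), inf01 [set tau B | B in F] <= tau (\bigcup_(B in F) B)).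

Variable tau : set X -> R.

Definition fnbhd (x : X) (A : set X) : R :=
  sup01 [set r | exists B : set X, B x /\ B `<=` A /\ r = tau B].

Definition fcl (A : set X) (x : X) : R := 1 - fnbhd x (~` A).

Definition fint (mu : X -> R) (x : X) : R :=
  sup01 [set r | exists B : set X, B x /\ r = Num.min (tau B) (inf01 [set mu y | y in B])].

Definition preopen (A : set X) : R := inf01 [set fint (fcl A) x | x in A].
Definition preclosed (A : set X) : R := preopen (~` A).
Definition Pnbhd (x : X) (A : set X) : R :=
  sup01 [set r | exists B : set X, B x /\ B `<=` A /\ r = preopen B].

Definition relative (rho : set X -> R) (G B : set X) : R :=
  sup01 [set r | exists V : set X, V `&` G = B /\ r = rho V].

(* fuzzy families of subsets of G: P(G) -> [0,1] (values outside P(G) irrelevant) *)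
Definition fuzzy_family (G : set X) (Rf : set X -> R) : Prop :=
  forall B, B `<=` G -> 0 <= Rf B <= 1.
Definition subfam (G : set X) (p Rf : set X -> R) : Prop :=
  forall B, B `<=` G -> p B <= Rf B.

Definition Kdeg (Rf : set X -> R) (G : set X) : R :=
  inf01 [set sup01 [set Rf B | B in [set B | B x /\ B `<=` G]] | x in G].

Definition incl (Rf rho : set X -> R) (G : set X) : R :=
  inf01 [set Num.min 1 (1 - Rf B + rho B) | B in [set B | B `<=` G]].

Definition FF (p : set X -> R) (G : set X) : R :=
  1 - inf01 [set d | 0 <= d <= 1 /\ finite_set [set B | B `<=` G /\ d < p B]].

Definition Gamma (G : set X) (rho : set X -> R) : R :=
  inf01 [set luk_imp (luk_and (Kdeg Rf G) (incl Rf rho G))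
                     (sup01 [set luk_and (Kdeg p G) (FF p G)
                            | p in [set p | fuzzy_family G p /\ subfam G p Rf]])
        | Rf in fuzzy_family G].

Definition GammaP (G : set X) : R := Gamma G (relative preopen G).

Definition LPC : R :=
  inf01 [set sup01 [set luk_and (Pnbhd x B) (GammaP B) | B in [set: set X]]
        | x in [set: X]].

Definition PnbhdA (A : set X) (x : X) (G : set X) : R :=
  sup01 [set r | exists C : set X, C x /\ C `<=` G /\ r = relative preopen A C].

Definition LPC_sub (A : set X) : R :=
  inf01 [set sup01 [set luk_and (PnbhdA A x G) (Gamma G (relative preopen G))
                   | G in [set G | G `<=` A]]
        | x in A].

End FuzzyDefs.

(* Main.v *)
Require Import Defs.
From HB Require Import structures.
From mathcomp Require Import all_boot all_order all_algebra.
From mathcomp Require Import boolp classical_sets cardinality reals.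
From mathcomp Require Import lra.
Import Order.TTheory GRing.Theory Num.Theory.
Local Open Scope classical_set_scope.
Local Open Scope ring_scope.

Section Helpers.
Variable R : realType.
Implicit Types S : set R.

Lemma sup01_ge0 S : 0 <= sup01 S.
Proof.
rewrite /sup01; case: (pselect (has_sup (S `|` [set 0]))) => h.
  by apply: (sup_upper_bound h); right.
by rewrite sup_out.
Qed.

Lemma sup01_ub S s M : (forall t, S t -> t <= M) -> S s -> s <= sup01 S.
Proof.
move=> hM Ss; rewrite /sup01; apply: ub_le_sup; last by left.
exists (Num.max M 0) => t [/hM tM|->]; rewrite le_max ?tM ?lexx ?orbT //.
Qed.

Lemma sup01_le S M : 0 <= M -> (forall t, S t -> t <= M) -> sup01 S <= M.
Proof.
move=> M0 hM; rewrite /sup01; apply: ge_sup; first by exists 0; right.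
by move=> t [/hM|->].
Qed.

Lemma sup01_gt S d : 0 <= d -> d < sup01 S -> exists2 t, S t & d < t.
Proof.
move=> d0 /sup_gt [|t [St|->] dt]; first by exists 0; right.
  by exists t.
by move: (lt_le_trans dt d0); rewrite ltxx.
Qed.

Lemma inf01_le1 S : inf01 S <= 1.
Proof.
rewrite /inf01; case: (pselect (has_lbound (S `|` [set 1]))) => h.
  by apply: (ge_inf h); right.
rewrite inf_out // => -[_ ]; exact: h.
Qed.

Lemma inf01_lb S s m : (forall t, S t -> m <= t) -> S s -> inf01 S <= s.
Proof.
move=> hm Ss; rewrite /inf01; apply: ge_inf; last by left.
exists (Num.min m 1) => t [/hm tM|->]; rewrite ge_min ?tM ?lexx ?orbT //.
Qed.

Lemma inf01_ge S m : m <= 1 -> (forall t, S t -> m <= t) -> m <= inf01 S.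
Proof.
move=> M0 hM; rewrite /inf01; apply: lb_le_inf; first by exists 1; right.
by move=> t [/hM|->].
Qed.
Lemma luk_and_ge (a b : R) : a + b - 1 <= luk_and a b.
Proof. by rewrite /luk_and le_max lexx orbT. Qed.
Lemma luk_and_ge0 (a b : R) : 0 <= luk_and a b.
Proof. by rewrite /luk_and le_max lexx. Qed.
Lemma luk_and_le (a b c : R) : 0 <= c -> a + b - 1 <= c -> luk_and a b <= c.
Proof. by move=> h1 h2; rewrite /luk_and ge_max h1 h2. Qed.
Lemma luk_imp_le1 (a b : R) : luk_imp a b <= 1.
Proof. by rewrite /luk_imp ge_min lexx. Qed.
Lemma luk_imp_le (a b : R) : luk_imp a b <= 1 - a + b.
Proof. by rewrite /luk_imp ge_min lexx orbT. Qed.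
Lemma luk_imp_ge (a b c : R) : c <= 1 -> c <= 1 - a + b -> c <= luk_imp a b.
Proof. by move=> h1 h2; rewrite /luk_imp le_min h1 h2. Qed.
Lemma luk_and_le1 (a b : R) : a <= 1 -> b <= 1 -> luk_and a b <= 1.
Proof. move=> ha hb; apply: luk_and_le => //; lra. Qed.
Lemma luk_imp_ge0 (a b : R) : a <= 1 -> 0 <= b -> 0 <= luk_imp a b.
Proof. move=> ha hb; apply: luk_imp_ge => //; lra. Qed.

End Helpers.

Section Bounds.
Variables (R : realType) (X : Type) (tau : set X -> R).
Hypothesis tau1 : forall A, tau A <= 1.

Lemma fint_le1 mu x : fint tau mu x <= 1.
Proof.
apply: sup01_le => // _ [B [_ ->]].
by rewrite ge_min tau1.
Qed.

Lemma preopen_ge0 A : 0 <= preopen tau A.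
Proof. apply: inf01_ge => // _ [x _ <-]; exact: sup01_ge0. Qed.
Lemma preopen_le1 A : preopen tau A <= 1.
Proof. exact: inf01_le1. Qed.

Lemma relative_ge0 G B : 0 <= relative (preopen tau) G B.
Proof. exact: sup01_ge0. Qed.
Lemma relative_le1 G B : relative (preopen tau) G B <= 1.
Proof. by apply: sup01_le => // _ [V [_ ->]]; exact: preopen_le1. Qed.
Lemma relative_ub G V : preopen tau V <= relative (preopen tau) G (V `&` G).
Proof.
apply: (@sup01_ub _ _ _ 1); last by exists V.
by move=> _ [W [_ ->]]; exact: preopen_le1.
Qed.

Lemma Kdeg_le1 (Rf : set X -> R) G : Kdeg Rf G <= 1. Proof. exact: inf01_le1. Qed.
Lemma incl_le1 (Rf rho : set X -> R) G : incl Rf rho G <= 1. Proof. exact: inf01_le1. Qed.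
Lemma Gamma_le1 G (rho : set X -> R) : Gamma G rho <= 1. Proof. exact: inf01_le1. Qed.
Lemma FF_le1 (p : set X -> R) G : FF p G <= 1.
Proof.
rewrite /FF; suff : 0 <= inf01 [set d | 0 <= d <= 1 /\
  finite_set [set B | B `<=` G /\ d < p B]] by lra.
by apply: inf01_ge => // d [/andP[]].
Qed.
Lemma PnbhdA_le1 A x G : PnbhdA tau A x G <= 1.
Proof. by apply: sup01_le => // _ [C [_ [_ ->]]]; exact: relative_le1. Qed.

End Bounds.

Section Main.
Variables (R : realType) (X : Type) (tau : set X -> R).
Hypothesis tau1 : forall A, tau A <= 1.
Local Notation pre := (preopen tau).
Local Notation rel := (relative (preopen tau)).

Lemma gamma_sub (A B : set X) :
  luk_and (Gamma B (rel B)) (preclosed tau A) <= Gamma (A `&` B) (rel (A `&` B)).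
Proof.
set G := A `&` B.
set F := preclosed tau A.
set GB := Gamma B (rel B).
have F1 : F <= 1 by exact: preopen_le1.
have GB1 : GB <= 1 by exact: Gamma_le1.
apply: inf01_ge; first by apply: luk_and_le1.
move=> _ [Rf hRf <-].
set K := Kdeg Rf G. set I := incl Rf (rel G) G.
set a := luk_and K I.
pose Rf' (E : set X) : R := if pselect (E = ~` A `&` B) is left _ then 1
   else sup01 [set Num.min (Rf (V `&` G)) (pre V) | V in [set V | V `&` B = E]].
have Rf'1 : forall E, Rf' E <= 1.
  move=> E; rewrite /Rf'; case: pselect => [_|_]; first exact: lexx.
  apply: sup01_le => // _ [V _ <-]; by rewrite ge_min preopen_le1 orbT.
have Rf'0 : forall E, 0 <= Rf' E.
  move=> E; rewrite /Rf'; case: pselect => [_|_]; [exact: ler01|exact: sup01_ge0].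
have Rf'ff : fuzzy_family B Rf' by move=> E _; rewrite Rf'0 Rf'1.
have Rf'ub : forall V, ~ (V `&` B = ~` A `&` B) ->
    Num.min (Rf (V `&` G)) (pre V) <= Rf' (V `&` B).
  move=> V hV; rewrite /Rf'; case: pselect => [/hV//|_].
  apply: (@sup01_ub _ _ _ 1); last by exists V.
  move=> _ [W _ <-]; by rewrite ge_min preopen_le1 orbT.
have hRf1 : forall D, D `<=` G -> Rf D <= 1 by move=> D /hRf /andP[].
have hRf0 : forall D, D `<=` G -> 0 <= Rf D by move=> D /hRf /andP[].
have K1 : K <= 1 by exact: Kdeg_le1.
have I1 : I <= 1 by exact: incl_le1.
have a1 : a <= 1 by exact: luk_and_le1.
have F2 : a <= Kdeg Rf' B.
  apply: inf01_ge => //.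
  move=> _ [x Bx <-].
  set M := sup01 _.
  have M0 : 0 <= M by exact: sup01_ge0.
  have Mub : forall E, E x -> E `<=` B -> Rf' E <= M.
    move=> E Ex EB; apply: (@sup01_ub _ _ _ 1); last by exists E.
    by move=> _ [E' _ <-].
  have [Ax|nAx] := pselect (A x); last first.
    have := Mub (~` A `&` B) (conj nAx Bx) (@subIsetr _ _ _).
    rewrite /Rf'; case: pselect => [_ h|[]//].
    exact: le_trans h.
  apply: luk_and_le => //.
  have Gx : G x by split.
  have : K <= sup01 [set Rf D | D in [set D | D x /\ D `<=` G]].
    apply: (@inf01_lb _ _ _ 0); last by exists x.
    move=> _ [y _ <-]; exact: sup01_ge0.
  suff : sup01 [set Rf D | D in [set D | D x /\ D `<=` G]] <= M + 1 - I by lra.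
  apply: sup01_le; first lra.
  move=> _ [D [Dx DG] <-].
  have [RfM|MRf] := leP (Rf D) M; first lra.
  have rhoM : rel G D <= M.
    apply: sup01_le => // _ [V [VG ->]].
    have hx : (V `&` B) x by move: Dx; rewrite -VG => -[Vx [_ Bx']]; split.
    have hne : ~ (V `&` B = ~` A `&` B).
      by move=> e; move: hx; rewrite e => -[nA _]; exact: nA.
    have h2 := Rf'ub V hne; rewrite VG in h2.
    have h1 := Mub _ hx (@subIsetr _ _ _).
    have := le_trans h2 h1.
    rewrite ge_min => /orP[h|//]; lra.
  have : I <= Num.min 1 (1 - Rf D + rel G D).
    apply: (@inf01_lb _ _ _ 0); last by exists D.
    move=> _ [D' D'G <-]; rewrite le_min ler01 /=.
    have := hRf1 _ D'G; have := relative_ge0 _ _ tau G D'; lra.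
  rewrite le_min => /andP[_]; lra.
have F3 : F <= incl Rf' (rel B) B.
  apply: inf01_ge => // _ [E EB <-].
  rewrite le_min F1 /=.
  rewrite /Rf'; case: pselect => [e|ne].
    have : F <= rel B E by rewrite /F /preclosed e; exact: relative_ub.
    lra.
  have : sup01 [set Num.min (Rf (V `&` G)) (pre V) | V in [set V | V `&` B = E]]
         <= rel B E.
    apply: sup01_le; first exact: relative_ge0.
    move=> _ [V VB <-]; rewrite ge_min; apply/orP; right.
    rewrite -VB; exact: relative_ub.
  lra.
have F4 : forall p', fuzzy_family B p' /\ subfam B p' Rf' ->
   luk_and (Kdeg p' B) (FF p' B) <= sup01 [set luk_and (Kdeg p G) (FF p G)
      | p in [set p | fuzzy_family G p /\ subfam G p Rf]].
  move=> p' [p'ff p'sub].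
  have p'1 : forall E, E `<=` B -> p' E <= 1 by move=> E /p'ff/andP[].
  pose p (D : set X) : R := sup01 [set p' E | E in
     [set E | E `<=` B /\ ~ (E = ~` A `&` B) /\ E `&` A = D]].
  have p1 : forall D, p D <= 1.
    move=> D; apply: sup01_le => // _ [E [EB _] <-]; exact: p'1.
  have pub : forall E, E `<=` B -> ~ (E = ~` A `&` B) -> p' E <= p (E `&` A).
    move=> E EB ne; apply: (@sup01_ub _ _ _ 1); last by exists E.
    by move=> _ [E' [E'B _] <-]; exact: p'1.
  have pff : fuzzy_family G p by move=> D _; rewrite sup01_ge0 p1.
  have psub : subfam G p Rf.
    move=> D DG; apply: sup01_le; first exact: hRf0.
    move=> _ [E [EB [ne ED]] <-].
    apply: le_trans (p'sub _ EB) _.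
    rewrite /Rf'; case: pselect => [//|_].
    apply: sup01_le; first exact: hRf0.
    move=> _ [V VB <-]; rewrite ge_min; apply/orP; left.
    have -> : V `&` G = D.
      rewrite -ED -VB /G; apply/seteqP; split=> z /=; tauto.
    exact: lexx.
  have Kle : Kdeg p' B <= Kdeg p G.
    apply: inf01_ge; first exact: Kdeg_le1.
    move=> _ [x [Ax Bx] <-].
    apply: (@le_trans _ _ (sup01 [set p' E | E in [set E | E x /\ E `<=` B]])).
      apply: (@inf01_lb _ _ _ 0); last by exists x.
      move=> _ [y _ <-]; exact: sup01_ge0.
    apply: sup01_le; first exact: sup01_ge0.
    move=> _ [E [Ex EB] <-].
    have ne : ~ (E = ~` A `&` B) by move=> e; move: Ex; rewrite e => -[].
    apply: le_trans (pub _ EB ne) _.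
    apply: (@sup01_ub _ _ _ 1); last first.
      exists (E `&` A) => //; split; first by split.
      by move=> z [Ez Az]; split => //; exact: EB.
    by move=> _ [D _ <-].
  have FFle : FF p' B <= FF p G.
    rewrite /FF.
    suff : inf01 [set d | 0 <= d <= 1 /\ finite_set [set D | D `<=` G /\ d < p D]]
       <= inf01 [set d | 0 <= d <= 1 /\ finite_set [set E | E `<=` B /\ d < p' E]]
      by lra.
    apply: inf01_ge; first exact: inf01_le1.
    move=> d [d01 fin].
    have /andP[d0 _] := d01.
    apply: (@inf01_lb _ _ _ 0); last first.
      split=> //.
      apply: (sub_finite_set _ (finite_image (fun E => E `&` A) fin)).
      move=> D [DG dD].
      have [_ [E [EB [_ ED]] <-] dE] := @sup01_gt _ _ d d0 dD.
      by exists E.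
    by move=> t [/andP[]].
  have : luk_and (Kdeg p G) (FF p G) <= sup01 [set luk_and (Kdeg p G) (FF p G)
      | p in [set p | fuzzy_family G p /\ subfam G p Rf]].
    apply: (@sup01_ub _ _ _ 1); last by exists p.
    move=> _ [q _ <-]; apply: luk_and_le1; [exact: Kdeg_le1|exact: FF_le1].
  apply: le_trans; apply: luk_and_le; first exact: luk_and_ge0.
  have := luk_and_ge _ (Kdeg p G) (FF p G); lra.
have hGB : GB <= luk_imp (luk_and (Kdeg Rf' B) (incl Rf' (rel B) B))
   (sup01 [set luk_and (Kdeg p B) (FF p B)
      | p in [set p | fuzzy_family B p /\ subfam B p Rf']]).
  apply: (@inf01_lb _ _ _ 0); last by exists Rf'.
  move=> _ [Q _ <-]; apply: luk_imp_ge0; last exact: sup01_ge0.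
  apply: luk_and_le1; [exact: Kdeg_le1|exact: incl_le1].
have ss : sup01 [set luk_and (Kdeg p B) (FF p B)
      | p in [set p | fuzzy_family B p /\ subfam B p Rf']] <=
    sup01 [set luk_and (Kdeg p G) (FF p G)
      | p in [set p | fuzzy_family G p /\ subfam G p Rf]].
  apply: sup01_le; first exact: sup01_ge0.
  move=> _ [p' hp' <-]; exact: F4.
have s0 := sup01_ge0 _ [set luk_and (Kdeg p G) (FF p G)
      | p in [set p | fuzzy_family G p /\ subfam G p Rf]].
have h1 := luk_imp_le _ (luk_and (Kdeg Rf' B) (incl Rf' (rel B) B))
   (sup01 [set luk_and (Kdeg p B) (FF p B)
      | p in [set p | fuzzy_family B p /\ subfam B p Rf']]).
have h2 := luk_and_ge _ (Kdeg Rf' B) (incl Rf' (rel B) B).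
apply: luk_imp_ge; first exact: luk_and_le1.
apply: luk_and_le; lra.
Qed.

End Main.

Theorem theorem4p1 (R : realType) (X : Type) (tau : set X -> R)
  (htau : is_fuzzifying_topology tau) (A : set X) :
  luk_and (LPC tau) (preclosed tau A) <= LPC_sub tau A.
Proof.
have tau1 : forall B, tau B <= 1 by move=> B; case: htau => /(_ B)/andP[].
set F := preclosed tau A.
have F1 : F <= 1 by exact: preopen_le1.
have L1 : LPC tau <= 1 by exact: inf01_le1.
apply: inf01_ge; first exact: luk_and_le1.
move=> _ [x Ax <-].
set S := sup01 _.
have S0 : 0 <= S by exact: sup01_ge0.
apply: luk_and_le => //.
have : LPC tau <= sup01 [set luk_and (Pnbhd tau x B) (GammaP tau B) | B in [set: set X]].
  apply: (@inf01_lb _ _ _ 0); last by exists x.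
  move=> _ [y _ <-]; exact: sup01_ge0.
suff : sup01 [set luk_and (Pnbhd tau x B) (GammaP tau B) | B in [set: set X]] <= S + 1 - F by lra.
apply: sup01_le; first lra.
move=> _ [B _ <-].
have hN : Pnbhd tau x B <= PnbhdA tau A x (A `&` B).
  apply: sup01_le; first exact: sup01_ge0.
  move=> r [C [Cx [CB ->]]].
  apply: le_trans (relative_ub _ _ tau A C) _.
  apply: (@sup01_ub _ _ _ 1).
    by move=> _ [C' [_ [_ ->]]]; exact: relative_le1.
  exists (C `&` A); split; first by split.
  split; last by [].
  by move=> z [Cz Az]; split => //; exact: CB.
have hG := @gamma_sub _ _ tau A B.
have hS : luk_and (PnbhdA tau A x (A `&` B))
    (Gamma (A `&` B) (relative (preopen tau) (A `&` B))) <= S.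
  apply: (@sup01_ub _ _ _ 1); last by exists (A `&` B) => //; exact: subIsetl.
  move=> _ [G _ <-]; apply: luk_and_le1; [exact: PnbhdA_le1|exact: Gamma_le1].
rewrite /GammaP.
apply: luk_and_le; first lra.
have := luk_and_ge _ (PnbhdA tau A x (A `&` B))
   (Gamma (A `&` B) (relative (preopen tau) (A `&` B))).
have := luk_and_ge _ (Gamma B (relative (preopen tau) B)) F.
lra.
Qed.
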